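(* Let $S$ be a solid and let $x,y,z\in S$. If $e(x)(y+z)\ne e(x)y+e(x)z$, then $e(x)y=e(x)z$.
   Context: A solid is a set $S$ with two binary operations $+$ and $\cdot$ (written $xy$) and a binary relation $\le$ satisfying the following axioms (all variables range over $S$). (A1) $+$ is associative and commutative. (A2) For each $x$ there is $e$ with $x+e=x$ such that $e+f=e$ for every $f$ with $x+f=x$; this $e$ is unique and is denoted $e(x)$ (the magnitude of $x$). An element $x$ with $x=e(x)$ is called a magnitude. (A3) For each $x$ there is $s$ with $x+s=e(x)$ and $e(s)=e(x)$; it is unique and denoted $-x$; write $x-y$ for $x+(-y)$. (A4) $e(x+y)=e(x)$ or $e(x+y)=e(y)$. (M1) $\cdot$ is associative and commutative. (M2) For each $x\neq e(x)$ there is $u$ with $xu=x$ such that $uv=u$ for every $v$ with $xv=x$; it is unique and denoted $u(x)$. (M3) For each $x\ne e(x)$ there is $d$ with $xd=u(x)$ and $u(d)=u(x)$; it is unique and denoted $x^{-1}$; write $y/x$ for $yx^{-1}$. (M4) If $x\neq e(x)$ and $y\ne e(y)$ then $u(xy)=u(x)$ or $u(xy)=u(y)$. (O1) $\le$ is a total order (reflexive, antisymmetric, transitive, total); $x<y$ means $x\le y$ and $x\ne y$. (O2) $x\le y\Rightarrow x+z\le y+z$. (O3) $y+e(x)=e(x)\Rightarrow (y\le e(x)$ and $-y\le e(x))$. (O4) $(e(x)<x$ and $y\le z)\Rightarrow xy\le xz$. (O5) $e(y)\le y\le z\Rightarrow e(x)y\le e(x)z$. (AM1) For all $x,y$ there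 is $z$ with $e(x)y=e(z)$. (AM2) $e(xy)=e(x)y+e(y)x$. (AM3) If $x\ne e(x)$ then $e(u(x))=e(x)/x$. (AM4) (distributivity axiom) $xy+xz=x(y+z)+e(x)y+e(x)z$. (AM5) $-(xy)=(-x)y$. (E1) There is $m$ with $m+x=x$ for all $x$; it is unique, called zero and denoted $0$. (E2) There is $u$ with $ux=x$ for all $x$; it is unique, called one and denoted $1$. (E3) There is $M$ with $e(x)+M=M$ for all $x$. (E4) There is $x$ with $e(x)\ne 0$ and $e(x)\ne M$. (E5) For every $x$ there is $a$ with $x=a+e(x)$ and $e(a)=0$. (E6) If $x,y$ are magnitudes with $x<y$, there is $z$ with $z\ne e(z)$ and $x<z<y$. Further notation: $S^*=\{x\in S: x\ne e(x)\}$ (zeroless elements). $x$ is positive if $e(x)\le x$ and negative if $x<e(x)$; $|x|=x$ if $x$ is positive and $|x|=-x$ if $x$ is negative. $x$ is precise if $e(x)=0$. The relative uncertainty $R(x)$ is $e(u(x))$ if $x\ne e(x)$, and $M$ (from (E3)) if $x=e(x)$. *)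

(* Defs.v *)
(* Axiomatic definition of a "solid" (Dinis--van den Berg). *)
From Stdlib Require Import Classical.

(* The operations e(.), -(.), u(.), (.)^{-1} whose existence and uniqueness
   are asserted by axioms (A2),(A3),(M2),(M3) are carried as functions
   together with their characterizing properties and uniqueness.
   u and inv are total functions, but only specified on zeroless elements
   x <> e x.  zero (E1), one (E2) and M (E3) are carried as elements. *)
Record Solid : Type := {
  carrier :> Type;
  add : carrier -> carrier -> carrier;
  mul : carrier -> carrier -> carrier;
  le  : carrier -> carrier -> Prop;
  e   : carrier -> carrier;
  opp : carrier -> carrier;
  u   : carrier -> carrier;
  inv : carrier -> carrier;
  zero : carrier;
  one  : carrier;
  bigM : carrier;
  add_assoc : forall x y z, add x (add y z) = add (add x y) z;
  add_comm : forall x y, add x y = add y x;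
  A2_spec : forall x, add x (e x) = x /\ (forall f, add x f = x -> add (e x) f = e x);
  A2_uniq : forall x m, add x m = x -> (forall f, add x f = x -> add m f = m) -> m = e x;
  A3_spec : forall x, add x (opp x) = e x /\ e (opp x) = e x;
  A3_uniq : forall x s, add x s = e x -> e s = e x -> s = opp x;
  A4 : forall x y, e (add x y) = e x \/ e (add x y) = e y;
  mul_assoc : forall x y z, mul x (mul y z) = mul (mul x y) z;
  mul_comm : forall x y, mul x y = mul y x;
  M2_spec : forall x, x <> e x ->
     mul x (u x) = x /\ (forall v, mul x v = x -> mul (u x) v = u x);
  M2_uniq : forall x w, x <> e x -> mul x w = x ->
     (forall v, mul x v = x -> mul w v = w) -> w = u x;
  M3_spec : forall x, x <> e x -> mul x (inv x) = u x /\ u (inv x) = u x;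
  M3_uniq : forall x d, x <> e x -> mul x d = u x -> u d = u x -> d = inv x;
  M4 : forall x y, x <> e x -> y <> e y ->
     u (mul x y) = u x \/ u (mul x y) = u y;
  le_refl : forall x, le x x;
  le_antisym : forall x y, le x y -> le y x -> x = y;
  le_trans : forall x y z, le x y -> le y z -> le x z;
  le_total : forall x y, le x y \/ le y x;
  O2 : forall x y z, le x y -> le (add x z) (add y z);
  O3 : forall x y, add y (e x) = e x -> le y (e x) /\ le (opp y) (e x);
  O4 : forall x y z, (le (e x) x /\ e x <> x) -> le y z -> le (mul x y) (mul x z);
  O5 : forall x y z, le (e y) y -> le y z -> le (mul (e x) y) (mul (e x) z);
  AM1 : forall x y, exists z, mul (e x) y = e z;
  AM2 : forall x y, e (mul x y) = add (mul (e x) y) (mul (e y) x);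
  AM3 : forall x, x <> e x -> e (u x) = mul (e x) (inv x);
  AM4 : forall x y z, add (mul x y) (mul x z)
          = add (add (mul x (add y z)) (mul (e x) y)) (mul (e x) z);
  AM5 : forall x y, opp (mul x y) = mul (opp x) y;
  E1 : forall x, add zero x = x;
  E2 : forall x, mul one x = x;
  E3 : forall x, add (e x) bigM = bigM;
  E4 : exists x, e x <> zero /\ e x <> bigM;
  E5 : forall x, exists a, x = add a (e x) /\ e a = zero;
  E6 : forall x y, x = e x -> y = e y -> (le x y /\ x <> y) ->
         exists z, z <> e z /\ (le x z /\ x <> z) /\ (le z y /\ z <> y)
}.

Arguments add {s0}. Arguments mul {s0}. Arguments le {s0}. Arguments e {s0}.
Arguments opp {s0}. Arguments u {s0}. Arguments inv {s0}.

(* Main.v *)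
Require Import Defs.
From Stdlib Require Import Classical.

Section S.
Variable S : Solid.
Implicit Types x y z m n a : S.

Lemma ee x : e (e x) = e x.
Proof.
  symmetry. apply A2_uniq.
  - destruct (A2_spec S x) as [H1 H2]. apply H2. exact H1.
  - intros f Hf. exact Hf.
Qed.

Lemma mag_self m : e m = m -> add m m = m.
Proof. intros Hm. destruct (A2_spec S m) as [H _]. rewrite Hm in H. exact H. Qed.

Lemma mag_sum m n : e m = m -> e n = n -> add m n = m \/ add m n = n.
Proof.
  intros Hm Hn. destruct (A4 S m n) as [E|E].
  - left. destruct (A2_spec S (add m n)) as [_ H2].
    specialize (H2 n). rewrite E, Hm in H2. apply H2.
    rewrite <- add_assoc, (mag_self n Hn). reflexivity.
  - right. destruct (A2_spec S (add m n)) as [_ H2].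
    specialize (H2 m). rewrite E, Hn in H2. rewrite add_comm. apply H2.
    rewrite (add_comm S m n), <- add_assoc, (mag_self m Hm). reflexivity.
Qed.

Lemma mag_mul x y : e (mul (e x) y) = mul (e x) y.
Proof. destruct (AM1 S x y) as [z' Hz]. rewrite Hz. apply ee. Qed.

Lemma zero_le m : e m = m -> le (zero S) m.
Proof.
  intros Hm. destruct (O3 S m (zero S)) as [H _].
  - rewrite E1. reflexivity.
  - rewrite Hm in H. exact H.
Qed.

Lemma mag_le m n : e n = n -> add m n = n -> le m n.
Proof.
  intros Hn H. destruct (O3 S n m) as [H1 _].
  - rewrite Hn. exact H.
  - rewrite Hn in H1. exact H1.
Qed.

Lemma opp_mag m : e m = m -> opp m = m.
Proof.
  intros Hm. symmetry. apply A3_uniq.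
  - rewrite Hm. apply mag_self; auto.
  - reflexivity.
Qed.

Lemma mul_opp_r a z : e a = a -> mul a (opp z) = mul a z.
Proof.
  intros Ha. rewrite mul_comm, <- AM5, mul_comm, AM5, (opp_mag a Ha).
  reflexivity.
Qed.

Lemma add_swap4 y z y' z' :
  add (add y z) (add y' z') = add (add y y') (add z z').
Proof.
  rewrite <- !add_assoc. f_equal. rewrite !add_assoc. f_equal.
  apply add_comm.
Qed.

Lemma e_add y z : e (add y z) = add (e y) (e z).
Proof.
  assert (H : add (add y z) (add (e y) (e z)) = add y z).
  { rewrite add_swap4. destruct (A2_spec S y) as [-> _].
    destruct (A2_spec S z) as [-> _]. reflexivity. }
  destruct (A2_spec S (add y z)) as [_ H2]. specialize (H2 _ H).
  destruct (A4 S y z) as [E|E]; rewrite E in H2 |- *.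
  - rewrite add_assoc, (mag_self (e y) (ee y)) in H2. symmetry; exact H2.
  - rewrite (add_comm S (e y) (e z)), add_assoc, (mag_self (e z) (ee z)) in H2.
    rewrite add_comm. symmetry; exact H2.
Qed.

Lemma opp_add y z : opp (add y z) = add (opp y) (opp z).
Proof.
  symmetry. apply A3_uniq.
  - rewrite add_swap4. destruct (A3_spec S y) as [-> _].
    destruct (A3_spec S z) as [-> _]. symmetry. apply e_add.
  - rewrite !e_add. destruct (A3_spec S y) as [_ ->].
    destruct (A3_spec S z) as [_ ->]. reflexivity.
Qed.

Lemma Lmono a m z : e a = a -> e m = m -> le (mul a z) (mul a (add z m)).
Proof.
  intros Ha Hm.
  assert (Hz : forall z, le z (add z m)).
  { intros z0. pose proof (O2 S (zero S) m z0 (zero_le m Hm)) as H.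
    rewrite E1, (add_comm S m z0) in H. exact H. }
  destruct (le_total S (e z) z) as [H|H].
  - pose proof (O5 S a z (add z m) H (Hz z)) as H'. rewrite Ha in H'. exact H'.
  - assert (Hp : le (e (opp z)) (opp z)).
    { pose proof (O2 S z (e z) (opp z) H) as H'.
      destruct (A3_spec S z) as [E1' E2']. rewrite E1' in H'.
      rewrite E2'. rewrite add_comm in H'. rewrite <- E2' in H' at 2.
      destruct (A2_spec S (opp z)) as [E3 _]. rewrite E3 in H'. exact H'. }
    pose proof (O5 S a (opp z) (add (opp z) m) Hp (Hz _)) as H'.
    rewrite Ha in H'. rewrite (mul_opp_r a z Ha) in H'.
    rewrite <- (opp_mag m Hm) in H'. rewrite <- opp_add in H'.
    rewrite (mul_opp_r a _ Ha) in H'. exact H'.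
Qed.

Lemma AM4' x y z : add (mul (e x) y) (mul (e x) z)
  = add (mul (e x) (add y z)) (add (mul (e x) y) (mul (e x) z)).
Proof. rewrite AM4 at 1. rewrite ee, <- !add_assoc. reflexivity. Qed.

Lemma core x y z :
  add (mul (e x) y) (mul (e x) z) = mul (e x) z ->
  mul (e x) y <> mul (e x) z ->
  mul (e x) (add y z) = mul (e x) z.
Proof.
  intros Hpq Hne.
  set (a := e x) in *. assert (Ha : e a = a) by apply ee.
  set (p := mul a y) in *. set (q := mul a z) in *.
  set (w := mul a (add y z)).
  assert (Hp : e p = p) by apply mag_mul.
  assert (Hq : e q = q) by apply mag_mul.
  assert (Hw : e w = w) by apply mag_mul.
  assert (Hwq : add w q = q).
  { pose proof (AM4' x y z) as H. fold a p q w in H. rewrite Hpq in H.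
    symmetry; exact H. }
  pose proof (AM4' x (add y z) (opp y)) as H. fold a w in H.
  rewrite (mul_opp_r a y Ha) in H. fold p in H.
  assert (E : add (add y z) (opp y) = add z (e y)).
  { rewrite (add_comm S y z), <- add_assoc. destruct (A3_spec S y) as [-> _].
    reflexivity. }
  rewrite E in H. set (r := mul a (add z (e y))) in H.
  assert (Hr : e r = r) by apply mag_mul.
  assert (Hqr : le q r) by (apply Lmono; auto; apply ee).
  destruct (mag_sum w p Hw Hp) as [F|F]; rewrite F in H.
  - assert (le r w) by (apply mag_le; auto).
    assert (le w q) by (apply mag_le; auto).
    apply le_antisym; auto. eapply le_trans; eauto.
  - exfalso. apply Hne. apply le_antisym.
    + apply mag_le; auto.
    + eapply le_trans; [exact Hqr|]. apply mag_le; auto.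
Qed.

End S.

Theorem mainTheorem5 (S : Solid) (x y z : S) :
  mul (e x) (add y z) <> add (mul (e x) y) (mul (e x) z) ->
  mul (e x) y = mul (e x) z.
Proof.
  intros Hn.
  destruct (mag_sum S _ _ (mag_mul S x y) (mag_mul S x z)) as [F|F].
  - destruct (classic (mul (e x) z = mul (e x) y)) as [G|G]; [auto|].
    exfalso. apply Hn. rewrite add_comm in F.
    pose proof (core S x z y F G) as K. rewrite add_comm in K.
    rewrite K, add_comm, F. reflexivity.
  - destruct (classic (mul (e x) y = mul (e x) z)) as [G|G]; [auto|].
    exfalso. apply Hn. rewrite (core S x y z F G), F. reflexivity.
Qed.
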